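(* Let $G$ be a connected graph and $(T,\mathcal V)$, $\mathcal V=(V_t : t \in T)$, a normal semi-partition tree of $G$. Then: (1) for incomparable $t,t' \in T$, the set $V(\lceil t\rceil \cap \lceil t'\rceil)$ separates $V_t$ from $V_{t'}$ in $G$; (2) for every connected subgraph $H$ of $G$ meeting $G(T)$ there is a unique $\le_T$-minimal element $t \in T$ with $V_t \cap V(H) \ne \emptyset$; (3) if $T' \subseteq T$ is down-closed, then every component of $G(T) - G(T')$ is $G(\lfloor t\rfloor)$ for some $t$ minimal in $T \setminus T'$; (4) if $T' \subseteq T$ is down-closed, then for every component $C$ of $G - G(T')$ that meets $G(T)$, the graph $C \cap G(T)$ is a component of $G(T) - G(T')$.
   Context: An order tree is a poset $(T,\le)$ with a unique minimal element (root) in which every down-closure $\lceil t\rceil=\{t'\le t\}$ is well-ordered; write $\mathring{\lceil t\rceil}=\lceil t\rceil\setminus\{t\}$, $\lfloor t\rfloor = \{t' \in T: t' \ge t\}$. A set $X\subseteq T$ is down-closed (a rooted subtree) if it equals its down-closure. For an order tree $T$, a $T$-graph is a graph on vertex set $T$ in which the endvertices of every edge are comparable and, for each $t$, the set of neighbours of $t$ below $t$ is cofinal in $\mathring{\lceil t\rceil}$. For a graph $G$ and family $\mathcal V=(V_t: t\in T)$ of nonempty vertex sets, $(T,\mathcal V)$ is a normal semi-partition tree of $G$ if: (a) the $V_t$ are pairwise disjoint; (b) each $G[V_t]$ is connected; (c) the graph obtained from $G[\bigcup\mathcal V]$ by contracting each $V_t$ to a single vertex $t$ (deleting loops and parallel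 edges) is a $T$-graph; (d) for every $\bigcup\mathcal V$-path $P$ in $G$ (a path with at least one edge, endvertices in $\bigcup \mathcal V$, inner vertices outside $\bigcup\mathcal V$, and no edge inside $G[\bigcup\mathcal V]$) with endvertices in $V_t$ and $V_{t'}$, the nodes $t,t'$ are comparable. For $S\subseteq T$ put $V(S)=\bigcup_{t\in S}V_t$ and $G(S)=G[V(S)]$. *)

(* Defs.v *)
(* graphs and order trees as plain relations on arbitrary
   (possibly infinite) types; vertex sets are predicates. *)
From Stdlib Require Import List Relations.
Import ListNotations.
Set Implicit Arguments.

Section Graphs.
Variable V : Type.

Definition simple_graph (adj : V -> V -> Prop) : Prop :=
  (forall x y, adj x y -> adj y x) /\ (forall x, ~ adj x x).

Definition reach (E : V -> V -> Prop) (S : V -> Prop) (x y : V) : Prop :=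
  S x /\ clos_refl_trans V (fun a b => S a /\ S b /\ E a b) x y.

Definition gconnected (E : V -> V -> Prop) (S : V -> Prop) : Prop :=
  (exists x, S x) /\ forall x y, S x -> S y -> reach E S x y.

Definition subgraph (adj : V -> V -> Prop) (HV : V -> Prop) (HE : V -> V -> Prop)
  : Prop :=
  forall x y, HE x y -> HV x /\ HV y /\ adj x y /\ HE y x.

Definition component (adj : V -> V -> Prop) (S C : V -> Prop) : Prop :=
  (forall v, C v -> S v) /\ gconnected adj C /\
  forall D : V -> Prop, (forall v, C v -> D v) -> (forall v, D v -> S v) ->
    gconnected adj D -> forall v, D v -> C v.

Definition separates (adj : V -> V -> Prop) (X A B : V -> Prop) : Prop :=
  forall a b, A a -> B b -> ~ reach adj (fun v => ~ X v) a b.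

Fixpoint walk (E : V -> V -> Prop) (l : list V) : Prop :=
  match l with
  | x :: ((y :: _) as l') => E x y /\ walk E l'
  | _ => True
  end.
End Graphs.

Section Trees.
Variable T : Type.
Variable le : T -> T -> Prop.

Definition lt (x y : T) : Prop := le x y /\ x <> y.
Definition comparable (x y : T) : Prop := le x y \/ le y x.

Definition down (t : T) : T -> Prop := fun s => le s t.   (* ⌈t⌉ *)
Definition up (t : T) : T -> Prop := fun s => le t s.     (* ⌊t⌋ *)

Definition minimal_in (P : T -> Prop) (t : T) : Prop :=
  P t /\ forall s, P s -> le s t -> s = t.

Definition well_ordered_set (S : T -> Prop) : Prop :=
  (forall x y, S x -> S y -> comparable x y) /\
  (forall P : T -> Prop, (forall x, P x -> S x) -> (exists x, P x) ->
     exists m, P m /\ forall x, P x -> le m x).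

Definition order_tree : Prop :=
  ((forall x, le x x) /\ (forall x y, le x y -> le y x -> x = y) /\
   (forall x y z, le x y -> le y z -> le x z)) /\
  (exists r, minimal_in (fun _ => True) r /\
     forall r', minimal_in (fun _ => True) r' -> r' = r) /\
  (forall t, well_ordered_set (down t)).

Definition down_closed (X : T -> Prop) : Prop :=
  forall t s, X t -> le s t -> X s.

Definition T_graph (E : T -> T -> Prop) : Prop :=
  (forall t t', E t t' -> comparable t t') /\
  (forall t s, lt s t -> exists u, E u t /\ lt u t /\ le s u).
End Trees.

Section NSPT.
Variables (V T : Type) (adj : V -> V -> Prop) (le : T -> T -> Prop)
          (Vt : T -> V -> Prop).

Definition Vset (S : T -> Prop) : V -> Prop := fun v => exists t, S t /\ Vt t v.

(* contraction of G[U V] along the V_t, loops and parallel edges deleted *)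
Definition contracted (t t' : T) : Prop :=
  t <> t' /\ exists u w, Vt t u /\ Vt t' w /\ adj u w.

Definition normal_semi_partition_tree : Prop :=
  (forall t, exists v, Vt t v) /\
  (forall t t' v, Vt t v -> Vt t' v -> t = t') /\
  (forall t, gconnected adj (Vt t)) /\
  T_graph le contracted /\
  (forall (x y : V) (inner : list V) (t t' : T),
     inner <> [] -> NoDup (x :: inner ++ [y]) -> walk adj (x :: inner ++ [y]) ->
     (forall z, In z inner -> ~ Vset (fun _ => True) z) ->
     Vt t x -> Vt t' y -> comparable le t t').
End NSPT.

(* Main.v *)
Require Import Defs.
From Stdlib Require Import List Relations Classical.
Import ListNotations.
Set Implicit Arguments.

Lemma reach_S (V : Type) (E : V -> V -> Prop) S x y : reach E S x y -> S y.
Proof.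
  intros [Hx H]. induction H as [a b [_ [Hb _]]| |]; auto.
Qed.

Lemma reach_refl (V : Type) (E : V -> V -> Prop) (S : V -> Prop) x : S x -> reach E S x x.
Proof. intros; split; auto. apply rt_refl. Qed.

Lemma reach_trans (V : Type) (E : V -> V -> Prop) S x y z :
  reach E S x y -> reach E S y z -> reach E S x z.
Proof. intros [Hx H1] [_ H2]; split; auto. eapply rt_trans; eauto. Qed.

Lemma reach_edge (V : Type) (E : V -> V -> Prop) (S : V -> Prop) x y :
  S x -> S y -> E x y -> reach E S x y.
Proof. intros; split; auto. apply rt_step; repeat split; auto. Qed.

Lemma reach_sym (V : Type) (E : V -> V -> Prop) S x y :
  (forall a b, E a b -> E b a) -> reach E S x y -> reach E S y x.
Proof.
  intros Hs Hr. pose proof (reach_S Hr) as Hy. destruct Hr as [Hx H]. split; auto.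
  clear Hx Hy. induction H as [a b (Ha & Hb & Hab)| |]. apply rt_step; repeat split; auto.
  apply rt_refl. eapply rt_trans; eauto.
Qed.

Lemma reach_mono (V : Type) (E E' : V -> V -> Prop) (S S' : V -> Prop) x y :
  (forall v, S v -> S' v) -> (forall a b, S a -> S b -> E a b -> E' a b) ->
  reach E S x y -> reach E' S' x y.
Proof.
  intros HS HE [Hx H]. split; auto.
  clear Hx. induction H as [a b (Ha & Hb & Hab)| |]. apply rt_step; repeat split; auto.
  apply rt_refl. eapply rt_trans; eauto.
Qed.

Lemma walk_tail (V : Type) (E : V -> V -> Prop) a l : walk E (a :: l) -> walk E l.
Proof. destruct l; simpl; tauto. Qed.

Lemma walk_app_r (V : Type) (E : V -> V -> Prop) l1 l2 : walk E (l1 ++ l2) -> walk E l2.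
Proof. induction l1; simpl; intros; auto. apply IHl1. eapply walk_tail; eauto. Qed.

Lemma union_conn (V : Type) (E : V -> V -> Prop) (A B : V -> Prop) c :
  (forall a b, E a b -> E b a) ->
  gconnected E A -> gconnected E B -> A c -> B c ->
  gconnected E (fun v => A v \/ B v).
Proof.
  intros Hs [_ HA] [_ HB] Ac Bc. split. exists c; auto.
  assert (Hc : forall x, A x \/ B x -> reach E (fun v => A v \/ B v) c x).
  { intros x [Hx|Hx].
    - eapply reach_mono; [| |apply HA; eauto]; simpl; eauto.
    - eapply reach_mono; [| |apply HB; eauto]; simpl; eauto. }
  intros x y Hx Hy. eapply reach_trans; [apply reach_sym; [auto| apply (Hc x Hx)] | apply (Hc y Hy)].
Qed.

Lemma propag (V T : Type) (adj : V -> V -> Prop) (le : T -> T -> Prop)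
    (Vt : T -> V -> Prop) (S : V -> Prop) (Q : T -> Prop) :
  simple_graph adj -> normal_semi_partition_tree adj le Vt ->
  (forall s s', Q s -> comparable le s s' -> (exists v, S v /\ Vt s' v) -> Q s') ->
  forall a s, Vt s a -> Q s -> forall b, reach adj S a b -> forall s', Vt s' b -> Q s'.
Proof.
  intros [Hsym Hirr] (Hne & Hdisj & Hconn & [Hcomp _] & Hpath) HQ a s Ha Qs b [Sa Hr].
  set (UV := Vset Vt (fun _ => True)).
  assert (J : S b /\ (forall s', Vt s' b -> Q s') /\
    (~ UV b -> exists q x s0, Vt s0 x /\ Q s0 /\ Forall (fun z => ~UV z) (b :: q) /\
        NoDup (b :: q ++ [x]) /\ walk adj (b :: q ++ [x]))).
  2:{ apply J. }
  apply clos_rt_rtn1_iff in Hr. induction Hr as [|v w [Sv [Sw Hvw]] Hr IH].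
  - split; auto. split.
    + intros s' Hs'. rewrite (Hdisj _ _ _ Hs' Ha). auto.
    + intros HU. exfalso. apply HU. exists s; auto.
  - destruct IH as (_ & IHQ & IHU). split; auto.
    destruct (classic (UV v)) as [[sv [_ Hv]]|Hv]; destruct (classic (UV w)) as [[sw [_ Hw]]|Hw].
    + split. 2: intro HH; exfalso; apply HH; exists sw; auto.
      intros s' Hs'. rewrite (Hdisj _ _ _ Hs' Hw).
      destruct (classic (sv = sw)) as [<-|Hne']. auto.
      apply HQ with sv; auto. apply Hcomp. split; auto. exists v, w; auto.
      exists w; auto.
    + split. intros s' Hs'; exfalso; apply Hw; exists s'; auto.
      intros _. exists [], v, sv. split; auto. split; auto. split.
      constructor; auto. split.
      simpl. constructor. intros [E|[]]. subst; eapply Hirr; eauto.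
      constructor; auto. constructor.
      simpl. auto.
    + split. 2: intro HH; exfalso; apply HH; exists sw; auto.
      intros s' Hs'. rewrite (Hdisj _ _ _ Hs' Hw).
      destruct (IHU Hv) as (q & x & s0 & Hx & Q0 & HF & HN & HW).
      destruct (classic (w = x)) as [->|Hwx].
      { rewrite (Hdisj _ _ _ Hw Hx). auto. }
      assert (C : comparable le sw s0).
      { apply (Hpath w x (v :: q) sw s0); auto.
        - discriminate.
        - constructor; auto. intro Hin. change (In w ((v :: q) ++ [x])) in Hin. apply in_app_or in Hin as [Hin|Hin].
          + rewrite Forall_forall in HF. apply (HF w); [exact Hin| exists sw; auto].
          + destruct Hin as [E|[]]. congruence.
        - simpl. split; [auto|exact HW].
        - intros z Hz. rewrite Forall_forall in HF. apply HF. exact Hz. }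
      apply HQ with s0; auto. destruct C; [right|left]; auto. exists w; auto.
    + split. intros s' Hs'; exfalso; apply Hw; exists s'; auto.
      intros _.
      destruct (IHU Hv) as (q & x & s0 & Hx & Q0 & HF & HN & HW).
      destruct (classic (In w (v :: q))) as [Hin|Hnin].
      * apply in_split in Hin as (l1 & l2 & E).
        exists l2, x, s0. split; auto. split; auto.
        assert (E2 : v :: q ++ [x] = l1 ++ (w :: l2 ++ [x])).
        { change (v :: q ++ [x]) with ((v :: q) ++ [x]). rewrite E, <- app_assoc. reflexivity. }
        split; [|split].
        -- rewrite E in HF. apply Forall_app in HF. tauto.
        -- rewrite E2 in HN. apply NoDup_app_remove_l in HN. exact HN.
        -- rewrite E2 in HW. apply walk_app_r in HW. exact HW.
      * exists (v :: q), x, s0. split; auto. split; auto. split; [|split].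
        -- constructor; auto.
        -- constructor; auto. intro Hin. change (In w ((v :: q) ++ [x])) in Hin.
           apply in_app_or in Hin as [Hin|[E|[]]]. auto. subst. apply Hw. exists s0; auto.
        -- simpl. split; [auto|exact HW].
Qed.

Lemma up_conn (V T : Type) (adj : V -> V -> Prop) (le : T -> T -> Prop)
    (Vt : T -> V -> Prop) :
  simple_graph adj -> order_tree le -> normal_semi_partition_tree adj le Vt ->
  forall t, gconnected adj (Vset Vt (up le t)).
Proof.
  intros [Hsym Hirr] [[Hrefl [Hanti Htrans]] [_ Hwo]]
    (Hne & Hdisj & Hconn & [Hcomp Hcof] & Hpath) t.
  destruct (Hne t) as [a Ha].
  assert (Key : forall s b, le t s -> Vt s b -> reach adj (Vset Vt (up le t)) a b).
  { intros s b Hts Hb. apply NNPP. intro Hn.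
    destruct (proj2 (Hwo s) (fun x => le x s /\ le t x /\
         exists b, Vt x b /\ ~ reach adj (Vset Vt (up le t)) a b))
      as (m & (Hms & Htm & b0 & Hb0 & Hnr) & Hmin).
    { intros x Hx; apply Hx. }
    { exists s. split; auto. split; auto. exists b; auto. }
    destruct (classic (m = t)) as [->|Hmt].
    - apply Hnr. eapply reach_mono with (S := Vt t) (E := adj).
      + intros v Hv. exists t. split; unfold up; auto.
      + auto.
      + apply (proj2 (Hconn t)); auto.
    - destruct (Hcof m t) as (u & Hum & [Hum' Hne'] & Htu). split; auto.
      destruct Hum as [_ (u0 & w0 & Hu0 & Hw0 & Hadj)].
      assert (Hr : reach adj (Vset Vt (up le t)) a u0).
      { apply NNPP. intro Hn'.
        assert (le m u). { apply Hmin. split; eauto. }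
        apply Hne'; auto. }
      apply Hnr. eapply reach_trans. apply Hr. apply reach_trans with w0.
      apply reach_edge; [exists u; split; auto | exists m; split; auto | exact Hadj].
      eapply reach_mono with (S := Vt m) (E := adj).
      + intros v Hv. exists m. split; auto.
      + auto.
      + apply (proj2 (Hconn m)); auto. }
  split. exists a, t; split; unfold up; auto.
  intros x y [s1 [H1 Hx]] [s2 [H2 Hy]].
  eapply reach_trans. apply reach_sym; auto. apply (Key s1); eauto. apply (Key s2); eauto.
Qed.
Unset Implicit Arguments.

Theorem lemma4p1 (V T : Type) (adj : V -> V -> Prop) (le : T -> T -> Prop)
    (Vt : T -> V -> Prop) :
  simple_graph adj -> gconnected adj (fun _ => True) -> order_tree le ->
  normal_semi_partition_tree adj le Vt ->
  (* (1) *)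
  (forall t t', ~ comparable le t t' ->
     separates adj (Vset Vt (fun s => down le t s /\ down le t' s)) (Vt t) (Vt t')) /\
  (* (2) *)
  (forall (HV : V -> Prop) (HE : V -> V -> Prop),
     subgraph adj HV HE -> gconnected HE HV ->
     (exists v, HV v /\ Vset Vt (fun _ => True) v) ->
     exists t, minimal_in le (fun s => exists v, Vt s v /\ HV v) t /\
       forall t', minimal_in le (fun s => exists v, Vt s v /\ HV v) t' -> t' = t) /\
  (* (3) *)
  (forall T' : T -> Prop, down_closed le T' ->
     forall C : V -> Prop,
       component adj (fun v => Vset Vt (fun _ => True) v /\ ~ Vset Vt T' v) C ->
       exists t, minimal_in le (fun s => ~ T' s) t /\
         forall v, C v <-> Vset Vt (up le t) v) /\
  (* (4) *)
  (forall T' : T -> Prop, down_closed le T' ->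
     forall C : V -> Prop,
       component adj (fun v => ~ Vset Vt T' v) C ->
       (exists v, C v /\ Vset Vt (fun _ => True) v) ->
       component adj (fun v => Vset Vt (fun _ => True) v /\ ~ Vset Vt T' v)
                     (fun v => C v /\ Vset Vt (fun _ => True) v)).
Proof.
  intros Hsg _ Hot Hn.
  pose proof Hsg as [Hsym Hirr].
  pose proof Hot as [[Hrefl [Hanti Htrans]] [_ Hwo]].
  pose proof Hn as (Hne & Hdisj & Hconn & [Hcomp Hcof] & Hpath).
  assert (chain : forall t x y, le x t -> le y t -> comparable le x y).
  { intros t x y Hx Hy. apply (proj1 (Hwo t)); auto. }
  assert (wmin : forall t (P : T -> Prop), (forall x, P x -> le x t) -> (exists x, P x) ->
            exists m, P m /\ forall x, P x -> le m x).
  { intros t P H1 H2. apply (proj2 (Hwo t)); auto. }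
  assert (P1 : forall t t', ~ comparable le t t' ->
     separates adj (Vset Vt (fun s => down le t s /\ down le t' s)) (Vt t) (Vt t')).
  { intros t t' Hinc a b Ha Hb Hr.
    destruct (wmin t (fun x => le x t /\ ~ (le x t /\ le x t')))
      as (m0 & (Hm0t & HDm0) & Hmin).
    { intros x Hx; apply Hx. }
    { exists t. split; auto. intros [_ H]. apply Hinc. left; auto. }
    assert (Hq : le m0 t').
    { apply (@propag V T adj le Vt (fun v => ~ Vset Vt (fun s => down le t s /\ down le t' s) v)
                    (fun s => le m0 s) Hsg Hn) with (a := a) (s := t) (b := b); auto.
      intros s s' Qs Hc [w [Hw1 Hw2]].
      assert (HD : ~ (le s' t /\ le s' t')).
      { intro HD. apply Hw1. exists s'; split; auto. }
      destruct Hc as [Hc|Hc]; eauto.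
      destruct (chain s m0 s') as [H|H]; auto.
      apply Hmin. split; eauto. }
    apply HDm0; auto. }
  split; [exact P1|].
  assert (UPok : forall (T' : T -> Prop) t, down_closed le T' -> ~ T' t ->
            forall v, Vset Vt (up le t) v -> ~ Vset Vt T' v).
  { intros T' t HT' Ht v [s [Hs Hv]] [s' [Hs' Hv']].
    rewrite (Hdisj _ _ _ Hv' Hv) in Hs'. apply Ht. eapply HT'; eauto. }
  assert (PROP : forall (T' : T -> Prop) (S : V -> Prop) s0 t,
            (forall v, S v -> ~ Vset Vt T' v) ->
            le t s0 -> (forall x, (le x s0 /\ ~ T' x) -> le t x) ->
            forall a s, Vt s a -> le t s -> forall b, reach adj S a b ->
            forall s', Vt s' b -> le t s').
  { intros T' S s0 t HS Hts0 Hmin a s Ha Hts b Hr s' Hb.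
    apply (@propag V T adj le Vt S (fun s => le t s) Hsg Hn) with (a := a) (s := s) (b := b); auto.
    intros s1 s2 Q1 Hc [w [Hw1 Hw2]].
    assert (HT2 : ~ T' s2). { intro H. apply (HS w Hw1). exists s2; auto. }
    destruct Hc as [Hc|Hc]; eauto.
    destruct (chain s1 t s2) as [H|H]; auto.
    apply Hmin. split; eauto. }
  split.
  {
    intros HV HE Hsub [_ Hcon] [v0 [Hv0 [s0 [_ Hs0]]]].
    destruct (wmin s0 (fun x => le x s0 /\ exists v, Vt x v /\ HV v))
      as (m & (Hms0 & vm & Hvm & HVm) & Hmin).
    { intros x Hx; apply Hx. }
    { exists s0. split; eauto. }
    assert (All : forall s, (exists v, Vt s v /\ HV v) -> le m s).
    { intros s [v [Hv HVv]]. apply NNPP. intro Hnle.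
      destruct (classic (comparable le m s)) as [[Hc|Hc]|Hinc].
      - auto.
      - apply Hnle. apply Hmin. split; eauto.
      - assert (Hx : exists x, HV x /\ Vset Vt (fun s' => down le m s' /\ down le s s') x).
        { apply NNPP. intro Hno. apply (P1 m s Hinc vm v Hvm Hv).
          apply reach_mono with (E := HE) (S := HV).
          - intros x Hx Hx'. apply Hno. eauto.
          - intros x y _ _ Hxy. apply (Hsub x y Hxy).
          - apply Hcon; auto. }
        destruct Hx as (x & HVx & u & [Hum Hus] & Hux).
        assert (le m u). { apply Hmin. split; eauto. }
        assert (u = m) by auto. subst u. apply Hnle. exact Hus. }
    exists m. split.
    - split. eauto. intros s Hs Hsm. apply Hanti; auto.
    - intros t' [Ht' Hmt']. symmetry. apply Hmt'; eauto. }
  split.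
  {
    intros T' HT' C [HCS [[[c0 Hc0] HCc] HCmax]].
    destruct (HCS c0 Hc0) as [[s0 [_ Hs0]] Hn0].
    assert (Ns0 : ~ T' s0). { intro H. apply Hn0. exists s0; auto. }
    destruct (wmin s0 (fun x => le x s0 /\ ~ T' x)) as (t & (Hts0 & Nt) & Hmin).
    { intros x Hx; apply Hx. }
    { exists s0; auto. }
    assert (Sub : forall v, C v -> Vset Vt (up le t) v).
    { intros v Hv. destruct (HCS v Hv) as [[s [_ Hs]] _]. exists s. split; auto.
      apply (PROP T' C s0 t) with (a := c0) (s := s0) (b := v); auto.
      intros w Hw. apply (HCS w Hw). }
    exists t. split.
    - split; auto. intros s Hs Hst. apply Hanti; auto. apply Hmin; split; eauto.
    - intros v. split. apply Sub.
      apply (HCmax (Vset Vt (up le t))); auto.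
      + intros w Hw. split. destruct Hw as [s [_ Hs]]. exists s; auto.
        apply (UPok T' t); auto.
      + apply up_conn; auto. }
  {
    intros T' HT' C [HCS [[[c0 Hc0] HCc] HCmax]] [c [Hc [s0 [_ Hs0]]]].
    assert (Ns0 : ~ T' s0). { intro H. apply (HCS c Hc). exists s0; auto. }
    destruct (wmin s0 (fun x => le x s0 /\ ~ T' x)) as (t & (Hts0 & Nt) & Hmin).
    { intros x Hx; apply Hx. }
    { exists s0; auto. }
    assert (Ac : Vset Vt (up le t) c). { exists s0; auto. }
    assert (A : forall v, Vset Vt (up le t) v -> C v).
    { intros v Hv. apply (HCmax (fun v => C v \/ Vset Vt (up le t) v)); [auto| | |auto].
      - intros w [Hw|Hw]. auto. apply (UPok T' t); auto.
      - apply union_conn with c; auto. split; eauto. apply up_conn; auto. }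
    assert (B : forall v, C v -> Vset Vt (fun _ => True) v -> Vset Vt (up le t) v).
    { intros v Hv [s [_ Hs]]. exists s. split; auto.
      apply (PROP T' C s0 t) with (a := c) (s := s0) (b := v); auto. }
    split; [|split].
    - intros v [Hv HU]. split; auto.
    - split. exists c; split; auto. exists s0; auto.
      intros x y [Hx HUx] [Hy HUy].
      apply reach_mono with (E := adj) (S := Vset Vt (up le t)).
      + intros v Hv. split. apply A; auto. destruct Hv as [s [_ Hs]]. exists s; auto.
      + auto.
      + apply (proj2 (up_conn Hsg Hot Hn t)); auto.
    - intros D HCD HDS HDc v Hv. split.
      + apply (HCmax (fun v => C v \/ D v)).
        * auto.
        * intros w [Hw|Hw]. auto. apply (HDS w Hw).
        * apply union_conn with c; auto. split; eauto. apply HCD. split; auto. exists s0; auto.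
        * auto.
      + apply (HDS v Hv). }
Qed.
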